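(* Let $\Lambda\subset\mathbb{R}^6$ be a lattice and $Q\in\mathrm{SO}(6)$ with $Q\Lambda=\Lambda$ and $Q^N=\mathbb{1}$, and let $\mathcal{P}=\mathbb{Z}_N=\langle\theta\rangle$ act on $\mathbb{R}^6$ by $\theta\mapsto Q$. Assume that for every $k\in\mathbb{Z}$ the fixed subspace $\mathrm{Fix}(Q^k)=\{x\in\mathbb{R}^6: Q^kx=x\}$ has dimension $0$, $2$ or $6$. Let $\mathcal{O}\subseteq\mathcal{P}^2$ be the $\mathcal{N}=2$ sector. Then $\mathcal{O}$ is closed under the action $\ast$ of $\mathrm{SL}(2,\mathbb{Z})$, and in particular under every subgroup of $\mathrm{SL}(2,\mathbb{Z})$. Moreover, all elements of a minimally closed subset of $\mathcal{O}$ fix the same plane, i.e. there is a single two-dimensional subspace $E$ such that every nontrivial component $g$ or $h$ of every element $(g,h)$ of that subset satisfies $\mathrm{Fix}(g)=E$.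
   Context: The action of $V=\begin{pmatrix} a&b\\c&d\end{pmatrix}\in\mathrm{SL}(2,\mathbb{Z})$ on $\mathcal{P}^2$ is $(g,h)\ast V=(g^ah^{-c},g^{-b}h^d)$. The $\mathcal{N}=2$ sector is the set of pairs $(g,h)\in\mathcal{P}^2$ with $(g,h)\neq(1,1)$ for which there is a two-dimensional subspace $E\subset\mathbb{R}^6$ (a fixed plane) such that each of $g,h$ is either the identity or has fixed subspace exactly $E$ (''$g$ and $h$ fix the same plane''). A subset is closed under a group $G$ if it is mapped into itself by every $V\in G$; a closed set is minimally closed if it is nonempty and contains no nonempty proper closed subset. *)

(* Defs.v *)
From HB Require Import structures.
From mathcomp Require Import all_boot all_order all_algebra.
From mathcomp Require Import reals.
Set Implicit Arguments. Unset Strict Implicit. Unset Printing Implicit Defensive.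
Import Order.TTheory GRing.Theory Num.Theory.
Local Open Scope ring_scope.

Section Defs.
Variable R : realType.

(* Vectors of R^6 are column vectors 'cV[R]_6; a matrix g acts by x |-> g *m x. *)

(* Fix(g) as a subspace (row space, mxalgebra convention): its rows u are
   exactly the u with u *m (g^T - 1) = 0, i.e. g *m u^T = u^T. *)
Definition Fix (g : 'M[R]_6) : 'M[R]_6 := kermx (g^T - 1%:M).

Definition is_lattice (L : 'cV[R]_6 -> Prop) : Prop :=
  exists B : 'M[R]_6, B \in unitmx /\
    forall x, L x <-> exists z : 'cV[int]_6, x = B *m map_mx (fun n : int => n%:~R) z.

Definition preserves (Q : 'M[R]_6) (L : 'cV[R]_6 -> Prop) : Prop :=
  forall y, L y <-> exists x, L x /\ y = Q *m x.

Definition in_SO6 (Q : 'M[R]_6) : Prop := Q *m Q^T = 1%:M /\ \det Q = 1.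

(* The point group P = <Q> realized as the (faithful) cyclic matrix group. *)
Definition inP (Q g : 'M[R]_6) : Prop := exists k : nat, g = Q ^+ k.

Definition id_or_fixes (g E : 'M[R]_6) : Prop := g = 1 \/ (Fix g == E)%MS.

Definition N2sector (Q : 'M[R]_6) (gh : 'M[R]_6 * 'M[R]_6) : Prop :=
  [/\ inP Q gh.1, inP Q gh.2, gh <> (1, 1) &
      exists E : 'M[R]_6, \rank E = 2%N /\ id_or_fixes gh.1 E /\ id_or_fixes gh.2 E].

Definition sl2act (gh : 'M[R]_6 * 'M[R]_6) (V : 'M[int]_2) : 'M[R]_6 * 'M[R]_6 :=
  (gh.1 ^ (V 0 0) * gh.2 ^ (- V 1 0), gh.1 ^ (- V 0 1) * gh.2 ^ (V 1 1)).

Definition closed_under (G : 'M[int]_2 -> Prop)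
  (S : 'M[R]_6 * 'M[R]_6 -> Prop) : Prop :=
  forall V x, G V -> S x -> S (sl2act x V).

Definition minimally_closed (G : 'M[int]_2 -> Prop)
  (S : 'M[R]_6 * 'M[R]_6 -> Prop) : Prop :=
  [/\ exists x, S x, closed_under G S &
      forall T : 'M[R]_6 * 'M[R]_6 -> Prop,
        (forall x, T x -> S x) -> (exists x, T x) -> closed_under G T ->
        forall x, S x -> T x].

End Defs.

Definition SL2Z (V : 'M[int]_2) : Prop := \det V = 1.

(* subgroup of SL(2,Z); inverse of a det-1 matrix is its adjugate *)
Definition subgroup_SL2Z (G : 'M[int]_2 -> Prop) : Prop :=
  [/\ forall V, G V -> SL2Z V, G 1%:M,
      forall U V, G U -> G V -> G (U *m V) &
      forall V, G V -> G (\adj V)].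

(* Main.v *)
Require Import Defs.
From HB Require Import structures.
From mathcomp Require Import all_boot all_order all_algebra.
From mathcomp Require Import reals.
From mathcomp Require Import ring zify.
Import Order.TTheory GRing.Theory Num.Theory.
Local Open Scope ring_scope.

Lemma d2 (V : 'M[int]_2) : \det V = V 0 0 * V 1 1 - V 0 1 * V 1 0.
Proof. rewrite (expand_det_row _ 0) !big_ord_recl big_ord0 /cofactor !det_mx11 /=.
rewrite !mxE /= addr0 expr0 mul1r expr1 mulN1r mulrN.
by congr (_ * _ - _ * _); congr (V _ _); apply/val_inj.
Qed.

Section Aux.
Variable R : realType.
Implicit Types (g h E : 'M[R]_6).

Definition fixE E g := g *m E^T = E^T.

Lemma fixE_mul E g h : fixE E g -> fixE E h -> fixE E (g * h).
Proof. by rewrite /fixE -mulmxE => Hg Hh; rewrite -mulmxA Hh Hg. Qed.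

Lemma fixE_exp E g (a : int) : g \is a GRing.unit -> fixE E g -> fixE E (g ^ a).
Proof.
move=> gu Hg.
have Hn : forall n : nat, fixE E (g ^+ n).
  elim=> [|n IH]; first by rewrite /fixE expr0 mul1mx.
  by rewrite exprS; apply: fixE_mul.
case: a => n /=; first exact: Hn.
have u : g ^+ n.+1 \is a GRing.unit by rewrite unitrX.
move: (Hn n.+1); rewrite /fixE mulmxE => H.
by rewrite -{1}H mulKr.
Qed.

Lemma id_to_fix E g : id_or_fixes g E -> fixE E g.
Proof.
case=> [->|/andP[_ sub]]; first by rewrite /fixE mul1mx.
move/sub_kermxP: sub; rewrite mulmxBr mulmx1 => /eqP; rewrite subr_eq0 => /eqP H.
by rewrite /fixE -{2}H trmx_mul trmxK.
Qed.

Lemma fix_to_id E g : \rank E = 2%N -> \rank (Fix g) \in [:: 0%N; 2%N; 6%N] ->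
  fixE E g -> id_or_fixes g E.
Proof.
move=> rE rF H.
have sE : (E <= Fix g)%MS.
  apply/sub_kermxP; rewrite mulmxBr mulmx1.
  have -> : E *m g^T = E by rewrite -[E]trmxK -trmx_mul H.
  by rewrite subrr.
have le := mxrankS sE; rewrite rE in le.
move: rF; rewrite !inE => /or3P[/eqP r0|/eqP r2|/eqP r6].
- by rewrite r0 in le.
- right; move: (mxrank_leqif_eq sE); rewrite rE r2 => [[_ e]].
  by move: e; rewrite eqxx => /esym/andP[a b]; apply/andP.
- left; move: r6; rewrite /Fix mxrank_ker => r6.
  have : \rank (g^T - 1%:M) = 0%N.
    have := rank_leq_row (g^T - 1%:M); lia.
  move/eqP; rewrite mxrank_eq0 subr_eq0 => /eqP e.
  by rewrite -[g]trmxK e trmx1.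
Qed.

Variable Q : 'M[R]_6.
Hypothesis Qu : Q \is a GRing.unit.
Variable N : nat.
Hypothesis N0 : (0 < N)%N.
Hypothesis QN : Q ^+ N = 1.
Hypothesis hrank : forall k : int, \rank (Fix (Q ^ k)) \in [:: 0%N; 2%N; 6%N].

Lemma inP_z g : inP Q g -> exists m : int, g = Q ^ m.
Proof. by case=> n ->; exists n%:Z. Qed.

Lemma z_inP (k : int) : inP Q (Q ^ k).
Proof.
rewrite (divz_eq k N) exprzDr // mulrC -exprz_exp.
have -> : Q ^ (N%:Z) = 1 by rewrite -QN.
rewrite exp1rz mul1r.
have : 0 <= (k %% N)%Z by apply: modz_ge0; rewrite eqz_nat -lt0n.
case: (k %% N)%Z => n // _.
by exists n.
Qed.

Lemma act_fix E x V : \rank E = 2%N -> inP Q x.1 -> inP Q x.2 ->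
  id_or_fixes x.1 E -> id_or_fixes x.2 E ->
  id_or_fixes (sl2act x V).1 E /\ id_or_fixes (sl2act x V).2 E.
Proof.
case: x => g h /= rE /inP_z[m1 e1] /inP_z[m2 e2] /id_to_fix f1 /id_to_fix f2.
subst g h; rewrite /sl2act /=.
have gen : forall a b : int, id_or_fixes ((Q ^ m1) ^ a * (Q ^ m2) ^ b) E.
  move=> a b; rewrite !exprz_exp -exprzDr //.
  apply: fix_to_id => //; rewrite exprzDr // -!exprz_exp.
  by apply: fixE_mul; apply: fixE_exp => //; apply: unitrXz.
by split; apply: gen.
Qed.

Lemma sector_closed x V : \det V = 1 -> N2sector Q x -> N2sector Q (sl2act x V).
Proof.
move=> dV [i1 i2 ne [E [rE [f1 f2]]]].
have [a1 a2] := @act_fix E x V rE i1 i2 f1 f2.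
split => //; last by exists E.
- by case: x i1 i2 {ne f1 f2 a1 a2} => g h /= /inP_z[m1 ->] /inP_z[m2 ->];
     rewrite !exprz_exp -exprzDr //; apply: z_inP.
- by case: x i1 i2 {ne f1 f2 a1 a2} => g h /= /inP_z[m1 ->] /inP_z[m2 ->];
     rewrite !exprz_exp -exprzDr //; apply: z_inP.
case: x i1 i2 ne {f1 f2 a1 a2} => g h /= /inP_z[m1 ->] /inP_z[m2 ->] ne.
rewrite /sl2act /= !exprz_exp -!exprzDr // => [[e1 e2]].
apply: ne; rewrite d2 in dV.
set k1 := _ + _ in e1; set k2 := _ + _ in e2.
have E1 : m1 = k1 * V 1 1 + k2 * V 1 0.
  rewrite /k1 /k2 -[LHS]mulr1 -dV; ring.
have E2 : m2 = k1 * V 0 1 + k2 * V 0 0.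
  rewrite /k1 /k2 -[LHS]mulr1 -dV; ring.
by rewrite E1 E2 !exprzDr // -!exprz_exp e1 e2 !exp1rz !mulr1.
Qed.

End Aux.

Theorem theorem2p9 (R : realType) (L : 'cV[R]_6 -> Prop) (Q : 'M[R]_6) (N : nat) :
  is_lattice L -> in_SO6 Q -> preserves Q L -> (0 < N)%N -> Q ^+ N = 1 ->
  (forall k : int, \rank (Fix (Q ^ k)) \in [:: 0%N; 2%N; 6%N]) ->
  closed_under SL2Z (N2sector Q) /\
  (forall G, subgroup_SL2Z G -> closed_under G (N2sector Q)) /\
  (forall G, subgroup_SL2Z G ->
     forall S : 'M[R]_6 * 'M[R]_6 -> Prop,
       (forall x, S x -> N2sector Q x) -> minimally_closed G S ->
       exists E : 'M[R]_6, \rank E = 2%N /\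
         forall gh, S gh -> id_or_fixes gh.1 E /\ id_or_fixes gh.2 E).
Proof.
move=> _ [QQ _] _ N0 QN hr.
have Qu : Q \is a GRing.unit.
  by have [u _] := mulmx1_unit QQ; exact: u.
have C1 : closed_under SL2Z (N2sector Q).
  by move=> V x dV sx; eapply sector_closed; eassumption.
split=> //; split.
  by move=> G [sG _ _ _] V x GV; apply: C1; apply: sG.
move=> G [sG _ _ _] S sub [[x0 Sx0] clS minS].
have [i1 i2 _ [E [rE [f1 f2]]]] := sub x0 Sx0.
exists E; split=> //.
pose T x := S x /\ id_or_fixes x.1 E /\ id_or_fixes x.2 E.
have H := minS T (fun x Tx => Tx.1) (ex_intro _ x0 (conj Sx0 (conj f1 f2))).
move=> gh Sgh; suff : T gh by case=> _ [].
apply: H => // V x GV [Sx [g1 g2]].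
have [j1 j2 _ _] := sub x Sx.
split; first exact: clS.
eapply act_fix; eassumption.
Qed.
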